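(* Let $R$ be a commutative ring with identity, $\mathcal S$ an associative $R$-algebra with identity and $\mathcal M$ a bimodule over $\mathcal S$. For $x\in\mathcal S$ let $T(x)=\{m\in\mathcal M: m(xa-ax)=0\text{ for all } a\in\mathcal S\}$. Then $T(x)$ is a subbimodule of $\mathcal M$. *)

(* Defs.v *)
From HB Require Import structures.
From mathcomp Require Import all_boot all_order all_algebra.
Set Implicit Arguments. Unset Strict Implicit. Unset Printing Implicit Defensive.
Import GRing.Theory.
Local Open Scope ring_scope.

Record bimodule (R : comPzRingType) (S : algType R) (M : lmodType R)
    (lmul : S -> M -> M) (rmul : M -> S -> M) : Prop := Bimodule {
  lmulDl : forall (s t : S) (m : M), lmul (s + t) m = lmul s m + lmul t m;
  lmulDr : forall (s : S) (m n : M), lmul s (m + n) = lmul s m + lmul s n;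
  lmulA  : forall (s t : S) (m : M), lmul (s * t) m = lmul s (lmul t m);
  lmul1  : forall m : M, lmul 1 m = m;
  rmulDl : forall (m n : M) (s : S), rmul (m + n) s = rmul m s + rmul n s;
  rmulDr : forall (m : M) (s t : S), rmul m (s + t) = rmul m s + rmul m t;
  rmulA  : forall (m : M) (s t : S), rmul m (s * t) = rmul (rmul m s) t;
  rmul1  : forall m : M, rmul m 1 = m;
  lrmulA : forall (s t : S) (m : M), rmul (lmul s m) t = lmul s (rmul m t);
  lmulZl : forall (r : R) (s : S) (m : M), lmul (r *: s) m = r *: lmul s m;
  lmulZr : forall (r : R) (s : S) (m : M), lmul s (r *: m) = r *: lmul s m;
  rmulZl : forall (r : R) (m : M) (s : S), rmul (r *: m) s = r *: rmul m s;
  rmulZr : forall (r : R) (m : M) (s : S), rmul m (r *: s) = r *: rmul m s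
}.

Definition subbimodule (R : comPzRingType) (S : algType R) (M : lmodType R)
    (lmul : S -> M -> M) (rmul : M -> S -> M) (N : M -> Prop) : Prop :=
  [/\ N 0,
      (forall m n, N m -> N n -> N (m + n)),
      (forall (r : R) m, N m -> N (r *: m)),
      (forall (s : S) m, N m -> N (lmul s m)) &
      (forall (s : S) m, N m -> N (rmul m s))].

Definition Tset (R : comPzRingType) (S : algType R) (M : lmodType R)
    (rmul : M -> S -> M) (x : S) : M -> Prop :=
  fun m => forall a : S, rmul m (x * a - a * x) = 0.

(* Main.v *)
Require Import Defs.
From mathcomp Require Import all_boot all_order all_algebra.
Local Open Scope ring_scope.
Import GRing.Theory.

Theorem lemma3p16 (R : comPzRingType) (S : algType R) (M : lmodType R)
    (lmul : S -> M -> M) (rmul : M -> S -> M)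
    (hM : bimodule lmul rmul) (x : S) :
  subbimodule lmul rmul (Tset rmul x).
Proof.
case: hM => lDl lDr lA l1 rDl rDr rA r1 lrA lZl lZr rZl rZr.
have r0 : forall s, rmul 0 s = 0.
  by move=> s; apply: (addIr (rmul 0 s)); rewrite add0r -rDl addr0.
have l0 : forall s, lmul s 0 = 0.
  by move=> s; apply: (addIr (lmul s 0)); rewrite add0r -lDr addr0.
split.
- by move=> a; rewrite r0.
- by move=> m n Hm Hn a; rewrite rDl Hm Hn addr0.
- by move=> r m Hm a; rewrite rZl Hm scaler0.
- by move=> s m Hm a; rewrite lrA Hm l0.
- move=> s m Hm a; rewrite -rA.
  have -> : s * (x * a - a * x) = (s * x - x * s) * a + (x * (s * a) - (s * a) * x).
    by rewrite !mulrBr !mulrBl !mulrA addrA subrK.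
  rewrite rDr Hm addr0 rA.
  have -> : s * x - x * s = (x * s - s * x) * (-1).
    by rewrite mulrN1 opprB.
  by rewrite rA Hm r0.
Qed.
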